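(* Let $V_1,\dots,V_t$ be pairwise disjoint finite sets with $|V_i|\ge2$ for all $i$. For any integer $\ell\ge2$, the number of subsets $S\subseteq\bigcup_{i\in[t]}V_i$ with $|S|=\ell$ and $|S\cap V_i|\ne1$ for every $i\in[t]$ is at most $$\Big(\frac{20}{\ell}\big(|V_1|^2+\dots+|V_t|^2\big)\Big)^{\ell/2}.$$ *)

(* Defs.v *)
From HB Require Import structures.
From mathcomp Require Import all_boot all_order all_algebra.
From mathcomp Require Import all_classical all_reals all_analysis.
Set Implicit Arguments. Unset Strict Implicit. Unset Printing Implicit Defensive.
Import Order.TTheory GRing.Theory Num.Theory.
Local Open Scope ring_scope.

Definition good_count (T : finType) (t : nat) (V : 'I_t -> {set T}) (l : nat) : nat :=
  #|[set S : {set T} | (S \subset \bigcup_(i < t) V i) && (#|S| == l)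
      & [forall i : 'I_t, #|S :&: V i| != 1%N]]|.

(* Main.v *)
From HB Require Import structures.
From mathcomp Require Import all_boot all_order all_algebra.
From mathcomp Require Import all_classical all_reals all_analysis.
From mathcomp Require Import ring lra.
Require Import Defs.
Import Order.TTheory GRing.Theory Num.Theory.
Local Open Scope ring_scope.

Section Aux.
Variable R : realType.

Lemma binom_ineq (x : R) (n : nat) : 0 <= x -> n%:R * x <= 1 ->
  (1 + x) ^+ n <= 1 + n%:R * x + (n%:R * x) ^+ 2.
Proof.
move=> x0; elim: n => [|n IH] Hn.
  by rewrite expr0 mul0r expr0n /= addr0 addr0.
have m0 : (0 : R) <= n%:R by rewrite ler0n.
have Hn' : n%:R * x <= 1.
  apply: le_trans Hn; rewrite ler_wpM2r // ler_nat; exact: leqnSn.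
rewrite exprS.
apply: le_trans (ler_wpM2l _ (IH Hn')) _; first lra.
rewrite -natr1 in Hn *.
nra.
Qed.

Lemma factor_bound (x : R) (n : nat) : 0 <= x ->
  (1 + x) ^+ n - x *+ n <= expR ((n%:R * x) ^+ 2).
Proof.
move=> x0.
have y0 : 0 <= n%:R * x by rewrite mulr_ge0 // ler0n.
have [y1|y1] := lerP (n%:R * x) 1.
  apply: le_trans (expR_ge1Dx _).
  have := @binom_ineq x n x0 y1; rewrite -mulr_natl; lra.
have h1 : (1 + x) ^+ n <= expR (n%:R * x).
  rewrite expRM_natl; apply: lerXn2r; rewrite ?nnegrE ?expR_ge0 //; first lra.
  exact: expR_ge1Dx.
have h2 : expR (n%:R * x) <= expR ((n%:R * x) ^+ 2).
  rewrite ler_expR expr2; nra.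
have : 0 <= x *+ n by rewrite mulrn_wge0.
lra.
Qed.

Variable T : finType.

Lemma subset_sum (x : R) (B : {set T}) :
  \sum_(A : {set T} | A \subset B) x ^+ #|A| = (1 + x) ^+ #|B|.
Proof.
rewrite addrC exprD1n.
rewrite (partition_big (fun A : {set T} => (inord #|A| : 'I_#|B|.+1)) xpredT) //=.
apply: eq_bigr => k _.
rewrite (eq_bigr (fun _ => x ^+ k)); last first.
  move=> A /andP[sAB /eqP <-]; rewrite inordK // ltnS; exact: subset_leq_card.
rewrite (eq_bigl (fun A => A \in [set A : {set T} | A \subset B & #|A| == k])); last first.
  move=> A; rewrite inE; case sAB: (A \subset B) => //=.
  rewrite -val_eqE /= inordK // ltnS; exact: subset_leq_card.
by rewrite sumr_const cards_draws.
Qed.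

Lemma subset_sum1 (x : R) (B : {set T}) :
  \sum_(A : {set T} | (A \subset B) && (#|A| != 1%N)) x ^+ #|A| =
  (1 + x) ^+ #|B| - x *+ #|B|.
Proof.
have E : \sum_(A : {set T} | (A \subset B) && (#|A| == 1%N)) x ^+ #|A| = x *+ #|B|.
  rewrite (eq_bigr (fun _ => x)); last by move=> A /andP[_ /eqP ->]; rewrite expr1.
  rewrite (eq_bigl (fun A => A \in [set A : {set T} | A \subset B & #|A| == 1%N])); last first.
    by move=> A; rewrite inE.
  by rewrite sumr_const cards_draws bin1.
rewrite -subset_sum [in RHS](bigID (fun A : {set T} => #|A| == 1%N)) /= E.
by rewrite addrC addrK.
Qed.
End Aux.

Lemma card_decomp (T : finType) (t : nat) (V : 'I_t -> {set T})
  (Hdisj : forall i j : 'I_t, i != j -> [disjoint V i & V j]) (S : {set T}) :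
  S \subset \bigcup_(i < t) V i -> #|S| = (\sum_(i < t) #|S :&: V i|)%N.
Proof.
move=> sSU.
rewrite -sum1_card.
transitivity (\sum_(a in S) \sum_(i < t) ((a \in V i) : nat))%N.
  apply: eq_bigr => a aS.
  have /finset.bigcupP [j _ aVj] := fintype.subsetP sSU a aS.
  rewrite (bigD1 j) //= aVj big1 // => i ij.
  by rewrite (disjointFl (Hdisj i j ij) aVj).
rewrite exchange_big; apply: eq_bigr => i _.
rewrite -sum1_card big_mkcond [RHS]big_mkcond /=.
by apply: eq_bigr => a _; rewrite inE; case: (a \in S); case: (a \in V i).
Qed.

Lemma weighted (R : realType) (T : finType) (t : nat) (V : 'I_t -> {set T})
  (Hdisj : forall i j : 'I_t, i != j -> [disjoint V i & V j])
  (x : R) (x0 : 0 <= x) (l : nat) :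
  (good_count V l)%:R * x ^+ l <= expR (x ^+ 2 * \sum_(i < t) (#|V i| ^ 2)%:R).
Proof.
rewrite /good_count.
set G := [set S : {set T} | _ ].
rewrite mulr_natl -sumr_const.
have step1 : \sum_(S in G) x ^+ l = \sum_(S in G) \prod_(i < t) x ^+ #|S :&: V i|.
  apply: eq_bigr => S; rewrite inE => /andP[/andP[sSU /eqP cS] _].
  by rewrite prodrXr -card_decomp // cS.
pose h := fun S : {set T} => [ffun i : 'I_t => S :&: V i].
pose P := fun i : 'I_t => [pred A : {set T} | (A \subset V i) && (#|A| != 1%N)].
pose F := fun f : {ffun 'I_t -> {set T}} => \prod_(i < t) x ^+ #|f i|.
have step2 : \sum_(S in G) \prod_(i < t) x ^+ #|S :&: V i| = \sum_(f in h @: G) F f.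
  rewrite big_imset /=.
    by apply: eq_bigr => S _; apply: eq_bigr => i _; rewrite ffunE.
  have key : forall S, S \in G -> S = \bigcup_(i < t) h S i.
    move=> S; rewrite inE => /andP[/andP[sSU _] _]; apply/finset.setP => a.
    apply/idP/finset.bigcupP => [aS | [i _]].
      have /finset.bigcupP[j _ aVj] := fintype.subsetP sSU a aS.
      by exists j => //; rewrite ffunE inE aS aVj.
    by rewrite ffunE inE => /andP[].
  by move=> S1 S2 S1G S2G eqh; rewrite (key S1) // (key S2) // eqh.
have step3 : \sum_(f in h @: G) F f <= \sum_(f in family P) F f.
  rewrite [X in _ <= X](bigID (fun f => f \in h @: G)) /=.
  rewrite [X in _ <= X + _](eq_bigl (fun f => f \in h @: G)); last first.
    move=> f; apply/andP/idP => [[]//|fh]; split => //.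
    case/finset.imsetP: fh => S; rewrite inE => /andP[_ /forallP HS] ->.
    by apply/familyP => i; rewrite ffunE inE subsetIr HS.
  rewrite lerDl; apply: sumr_ge0 => f _; apply: prodr_ge0 => i _.
  exact: exprn_ge0.
have step4 : \sum_(f in family P) F f = \prod_(i < t) \sum_(A | P i A) x ^+ #|A|.
  by rewrite bigA_distr_big_dep.
have step5 : \prod_(i < t) \sum_(A | P i A) x ^+ #|A| <=
    \prod_(i < t) expR ((#|V i|%:R * x) ^+ 2).
  apply: ler_prod => i _; apply/andP; split.
    by apply: sumr_ge0 => A _; exact: exprn_ge0.
  rewrite (eq_bigl (fun A : {set T} => (A \subset V i) && (#|A| != 1%N))) //.
  by rewrite subset_sum1; apply: factor_bound.
rewrite step1 step2; apply: le_trans step3 _; rewrite step4.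
apply: le_trans step5 _.
rewrite -expR_sum mulr_sumr le_eqVlt; apply/orP; left; apply/eqP; congr expR.
by apply: eq_bigr => i _; rewrite natrX exprMn mulrC.
Qed.

Lemma expR_half (R : realType) : expR (2^-1 : R) <= 2.
Proof.
have h1 := @expRxMexpNx_1 R 2^-1.
have h2 := @expR_ge1Dx R (- 2^-1).
have h3 : (0:R) <= expR 2^-1 by exact: expR_ge0.
have h4 : (1 : R) + - 2^-1 = 2^-1 by field.
rewrite h4 in h2.
have h5 : (2 : R) * 2^-1 = 1 by field.
nra.
Qed.

Theorem lemma6p4 (R : realType) (T : finType) (t : nat) (V : 'I_t -> {set T})
  (Hdisj : forall i j : 'I_t, i != j -> [disjoint V i & V j])
  (Hsize : forall i : 'I_t, (2 <= #|V i|)%N)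
  (l : nat) (Hl : (2 <= l)%N) :
  ((good_count V l)%:R : R) <=
    ((20 / l%:R) * (\sum_(i < t) (#|V i| ^ 2)%:R)) `^ (l%:R / 2).
Proof.
set N := \sum_(i < t) (#|V i| ^ 2)%:R.
set c := good_count V l.
have N0 : (0 : R) <= N by apply: sumr_ge0 => i _; rewrite ler0n.
have l0 : (0 : R) < l%:R by rewrite ltr0n (leq_trans _ Hl).
have [N00|Npos] := eqVneq N 0.
  have := @weighted R T t V Hdisj 2 ltac:(by []) l.
  rewrite -/N -/c N00 mulr0 expR0 => H.
  suff -> : c = 0%N by rewrite mulr0n; apply: powR_ge0.
  apply/eqP; rewrite -leqn0 leqNgt; apply/negP => c1.
  have : (1 : R) < c%:R * 2 ^+ l.
    apply: (@lt_le_trans _ _ (1 * 2)); first by rewrite mul1r ltr1n.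
    apply: ler_pM; rewrite ?ler0n ?ler1n //.
    by rewrite -[X in X <= _]expr1; apply: ler_weXn2l; rewrite ?ler1n //; exact: ltnW.
  by rewrite ltNge H.
have Np : 0 < N by rewrite lt_def Npos N0.
set b := 20 / l%:R * N.
have bp : 0 < b by rewrite /b mulr_gt0 // divr_gt0.
set s := Num.sqrt b.
have sp : 0 < s by rewrite sqrtr_gt0.
have ss : s ^+ 2 = b by rewrite sqr_sqrtr // ltW.
set x := 2 / s.
have x0 : 0 <= x by rewrite divr_ge0 // ltW.
have := @weighted R T t V Hdisj x x0 l; rewrite -/N -/c => H.
have Hx : x ^+ 2 * N <= l%:R * 2^-1.
  rewrite /x expr_div_n ss /b.
  have -> : 2 ^+ 2 / (20 / l%:R * N) * N = l%:R / 5 by field; rewrite ?gt_eqF.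
  rewrite ler_pM2l // lef_pV2 ?posrE //; lra.
have He : expR (x ^+ 2 * N) <= 2 ^+ l.
  apply: le_trans (_ : expR (l%:R * 2^-1) <= _); first by rewrite ler_expR.
  rewrite expRM_natl; apply: lerXn2r; rewrite ?nnegrE ?expR_ge0 //.
  exact: expR_half.
have Hc : c%:R * x ^+ l <= 2 ^+ l := le_trans H He.
have Hs : c%:R <= s ^+ l.
  have sl : 0 < s ^+ l by rewrite exprn_gt0.
  have tl : (0 : R) < 2 ^+ l by rewrite exprn_gt0.
  have -> : (c%:R : R) = c%:R * x ^+ l * (s ^+ l / 2 ^+ l).
    rewrite /x expr_div_n; field; rewrite ?gt_eqF //.
  apply: le_trans (ler_wpM2r _ Hc) _; first by rewrite divr_ge0 // ltW.
  by rewrite mulrC -mulrA mulVf ?gt_eqF // mulr1.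
apply: le_trans Hs _; rewrite le_eqVlt; apply/orP; left; apply/eqP.
rewrite /s -powR12_sqrt ?ltW // -powR_mulrn ?powR_ge0 // -powRrM.
by rewrite mulrC.
Qed.
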